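(* Let $1\le m<k$ and let $G$ be a complete $k$-partite graph in which exactly $m$ partite sets have cardinality $1$ and the remaining $k-m$ partite sets have cardinality at least $2$. Then $\rho_T(G)=k-m$.
   Context: Graphs are finite and simple. A complete $k$-partite graph is one whose vertex set is partitioned into $k$ nonempty independent sets (partite sets) such that two vertices are adjacent iff they lie in different partite sets. For $u,v\in(\mathbb{R}\cup\{\infty\})^k$ the min-plus tropical dot product is $u\odot v=\min_i(u_i+v_i)$. A min-plus $k$-tropical dot product representation of $G=(V,E)$ is a map $f:V\to(\mathbb{R}\cup\{\infty\})^k$ with a threshold $t>0$ such that for all distinct $x,y\in V$: $xy\in E$ iff $f(x)\odot f(y)\ge t$. $\rho_T(G)$ is the least $k\ge 1$ for which such a representation exists. *)

(* Defs.v *)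
From Stdlib Require Import Reals.
From mathcomp Require Import all_boot.
Set Implicit Arguments. Unset Strict Implicit. Unset Printing Implicit Defensive.

(* Extended reals R ∪ {∞}: [Some r] = r, [None] = ∞. *)
Definition xR := option R.

Definition xadd (a b : xR) : xR :=
  match a, b with Some x, Some y => Some (Rplus x y) | _, _ => None end.

Definition xmin (a b : xR) : xR :=
  match a, b with
  | Some x, Some y => Some (Rmin x y)
  | None, _ => b
  | _, None => a
  end.

Definition xge (a : xR) (t : R) : Prop :=
  match a with None => True | Some x => Rle t x end.

Definition tdot (k : nat) (u v : 'I_k -> xR) : xR :=
  \big[xmin/None]_(i < k) xadd (u i) (v i).

Definition trop_rep (T : finType) (e : rel T) (k : nat)
    (f : T -> 'I_k -> xR) (t : R) : Prop :=
  Rlt 0 t /\ forall x y : T, x != y -> (e x y <-> xge (tdot (f x) (f y)) t).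

Definition trop_representable (T : finType) (e : rel T) (k : nat) : Prop :=
  exists (f : T -> 'I_k -> xR) (t : R), trop_rep e f t.

Definition is_rhoT (T : finType) (e : rel T) (n : nat) : Prop :=
  (1 <= n)%N /\ trop_representable e n /\
  forall d : nat, (1 <= d)%N -> (d < n)%N -> ~ trop_representable e d.

Definition complete_multipartite_on (T : finType) (e : rel T) (P : {set {set T}}) : Prop :=
  partition P [set: T] /\
  forall x y : T, x != y -> e x y = (pblock P x != pblock P y).

(* Main.v *)
Require Import Defs.
From Stdlib Require Import Reals.
From mathcomp Require Import all_boot.
From Stdlib Require Import Lra Classical.

Lemma xge_min a b t : xge (xmin a b) t <-> xge a t /\ xge b t.
Proof.
case: a => [x|]; case: b => [y|] /=; try tauto.
split.
- move=> H; split; apply: Rle_trans H _; [apply: Rmin_l | apply: Rmin_r].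
- by case=> H1 H2; apply: Rmin_glb.
Qed.

Lemma xge_big (I : eqType) (r : seq I) (F : I -> xR) t :
  xge (\big[xmin/None]_(i <- r) F i) t <-> forall i, i \in r -> xge (F i) t.
Proof.
elim: r => [|a r IH].
  by rewrite big_nil; split => // _ i; rewrite in_nil.
rewrite big_cons; split.
- move/xge_min => [Ha /IH Hr] i; rewrite in_cons => /orP[/eqP ->|] //; exact: Hr.
- move=> H; apply/xge_min; split; first by apply: H; rewrite in_cons eqxx.
  by apply/IH => i Hi; apply: H; rewrite in_cons Hi orbT.
Qed.

Lemma xge_tdot k (u v : 'I_k -> xR) t :
  xge (tdot u v) t <-> forall i, xge (xadd (u i) (v i)) t.
Proof.
split => [/xge_big H i| H]; first by apply: H; exact: mem_index_enum.
by apply/xge_big => i _; exact: H.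
Qed.

Lemma not_xge_add u v t : ~ xge (xadd u v) t ->
  exists x y, u = Some x /\ v = Some y /\ Rlt (Rplus x y) t.
Proof.
case: u => [x|]; case: v => [y|] //= H.
exists x, y; split => //; split => //; exact: Rnot_le_lt.
Qed.

Lemma lower (T : finType) (e : rel T) (P Q : {set {set T}}) d :
  complete_multipartite_on e P -> Q \subset P ->
  (forall A, A \in Q -> 1 < #|A|) -> 0 < d -> trop_representable e d ->
  #|Q| <= d.
Proof.
move=> [Hpart He] sQP HQ2 d1 [f [t [_ Hrep]]].
have trivP : trivIset P by case/and3P: Hpart.
have pbl : forall A x, A \in P -> x \in A -> pblock P x = A.
  by move=> A x HA Hx; exact: def_pblock.
have ex : forall A : {set T}, exists i : 'I_d, A \in Q -> exists a b,
    [/\ a \in A, b \in A, a != b & ~ xge (xadd (f a i) (f b i)) t].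
  move=> A; case: (boolP (A \in Q)) => HA; last by exists (Ordinal d1).
  have HAP : A \in P by apply: (subsetP sQP).
  have [a [b [Ha Hb Hab]]] := card_gt1P (HQ2 A HA).
  have nab : ~~ e a b by rewrite He // (pbl A a) ?(pbl A b) ?eqxx.
  have nt : ~ xge (tdot (f a) (f b)) t.
    by move=> /(Hrep a b Hab) H; rewrite H in nab.
  have [i Hi] : exists i, ~ xge (xadd (f a i) (f b i)) t.
    by apply: not_all_ex_not => H; apply: nt; apply/xge_tdot.
  by exists i => _; exists a, b.
have [h Hh] := fin_all_exists ex.
have inj : {in Q &, injective h}.
  move=> A B HA HB Hij; apply: NNPP => nAB.
  have HAP : A \in P by apply: (subsetP sQP).
  have HBP : B \in P by apply: (subsetP sQP).
  have cross : forall x y, x \in A -> y \in B ->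
      xge (xadd (f x (h A)) (f y (h A))) t.
    move=> x y Hx Hy.
    have Hxy : x != y.
      apply/negP => /eqP exy; subst y; apply: nAB.
      by rewrite -(pbl A x) // (pbl B x).
    have : e x y by rewrite He // (pbl A x) // (pbl B y) //; apply/eqP.
    by move/(Hrep x y Hxy)/xge_tdot; apply.
  have [a [b [Ha Hb _ Hab]]] := Hh A HA.
  have [a' [b' [Ha' Hb' _ Hab']]] := Hh B HB.
  rewrite -Hij in Hab'.
  have [xa [xb [Ea [Eb Lt]]]] := not_xge_add _ _ _ Hab.
  have [xa' [xb' [Ea' [Eb' Lt']]]] := not_xge_add _ _ _ Hab'.
  have := cross _ _ Ha Ha'; have := cross _ _ Ha Hb';
  have := cross _ _ Hb Ha'; have := cross _ _ Hb Hb'.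
  rewrite Ea Eb Ea' Eb' /=; lra.
rewrite -(card_in_imset inj); apply: leq_trans (max_card _) _.
by rewrite card_ord.
Qed.

Theorem mainTheorem15 (T : finType) (e : rel T)
    (e_sym : symmetric e) (e_irr : irreflexive e)
    (k m : nat) (P : {set {set T}}) :
  (1 <= m)%N -> (m < k)%N ->
  complete_multipartite_on e P ->
  #|P| = k ->
  #|[set A in P | #|A| == 1%N]| = m ->
  (forall A, A \in P -> #|A| != 1%N -> (2 <= #|A|)%N) ->
  is_rhoT e (k - m).
Proof.
move=> m1 mk [Hpart He] cP cS H2.
set Q := [set A in P | #|A| != 1%N].
have cQ : #|Q| = k - m.
  have := cardsID [set A : {set T} | #|A| == 1%N] P.
  have -> : P :&: [set A : {set T} | #|A| == 1%N] = [set A in P | #|A| == 1%N].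
    by apply/setP => A; rewrite !inE.
  have -> : P :\: [set A : {set T} | #|A| == 1%N] = Q.
    by apply/setP => A; rewrite !inE andbC.
  by rewrite cS cP => <-; rewrite addKn.
split; first by rewrite subn_gt0.
split; last first.
  move=> d d1 dlt Hrep.
  have HQ : #|Q| <= d.
    apply: (@lower T e P Q d (conj Hpart He) _ _ d1 Hrep).
    - by apply/subsetP => A; rewrite inE => /andP[].
    - by move=> A; rewrite inE => /andP[HA Hn]; exact: H2.
  by move: HQ; rewrite cQ leqNgt dlt.
have [n' En] : exists n', k - m = n'.+1.
  by exists (k - m).-1; rewrite prednK // subn_gt0.
rewrite En.
pose g (A : {set T}) : 'I_n'.+1 := inord (index A (enum Q)).
have ginj : {in Q &, injective g}.
  move=> A B HA HB /(congr1 (@nat_of_ord _)); rewrite /g !inordK; last first.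
  - by rewrite -En -cQ cardE index_mem mem_enum.
  - by rewrite -En -cQ cardE index_mem mem_enum.
  move=> Hij.
  by rewrite -[A](nth_index A (s:=enum Q)) ?mem_enum // Hij nth_index // mem_enum.
have cov : cover P = [set: T] by case/and3P: Hpart => /eqP.
have pbP x : pblock P x \in P by rewrite pblock_mem // cov inE.
have inpb x : x \in pblock P x by rewrite mem_pblock cov inE.
pose f x (i : 'I_n'.+1) : xR :=
  if (pblock P x \in Q) && (g (pblock P x) == i) then Some R0 else None.
exists f, R1; split; first exact: Rlt_0_1.
move=> x y xy; rewrite He //; split.
- move=> Hne; apply/xge_tdot => i; rewrite /f.
  case: ifP => [/andP[qx /eqP gx]|] //; case: ifP => [/andP[qy /eqP gy]|] //.
  by move: Hne; rewrite (ginj _ _ qx qy (etrans gx (esym gy))) eqxx.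
- move=> /xge_tdot H; apply/negP => /eqP Hp.
  have qx : pblock P x \in Q.
    rewrite inE pbP /=; apply/negP => /cards1P [a Ha].
    have := inpb x; have := inpb y; rewrite -Hp Ha !inE => /eqP Ey /eqP Ex.
    by rewrite Ex Ey eqxx in xy.
  move: (H (g (pblock P x))); rewrite /f -Hp qx eqxx /=; lra.
Qed.
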